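(* In either the full model or the toy model (see context) with a fixed environment $\vec\alpha$, let $\vec m^1\le\vec m^2$ (componentwise) be two configurations with well coordinates $\tilde y^1,\tilde y^2$ computed at $F=0$, and let $\vec m^{1*},\vec m^{2*}$ be the results of applying the zero-force avalanche (ZFA) to each. (i) If $\max_i\tilde y^1_i>\max_i\tilde y^2_i$, then $\vec m^{1*}\le\vec m^2$. (ii) If $\max_i\tilde y^1_i=\max_i\tilde y^2_i$ and $m^1_j<m^2_j$ for $j=\arg\max_i\tilde y^1_i$, then $\vec m^{1*}\le\vec m^2$. (iii) If $\max_i\tilde y^1_i\ge\max_i\tilde y^2_i$, then $\vec m^{1*}\le\vec m^{2*}$.
   Context: Setting: $L$ particles with periodic boundary conditions; indices mod $L$, sequences $L$-periodic. Disorder $\alpha_0,\dots,\alpha_{L-1}$ i.i.d. uniform on $(-\tfrac12,\tfrac12)$; $\lambda>0$, $\eta=\frac{2}{2+\lambda+\sqrt{\lambda^2+4\lambda}}\in(0,1)$; $\Delta x_i=x_{i-1}-2x_i+x_{i+1}$ (periodic). A configuration is $\vec m\in\mathbb Z^L$; its well coordinates at force $F=0$ are, for the full model, $\tilde y_i=\frac{\eta}{1-\eta^2}\sum_{j\in\mathbb Z}\eta^{|i-j|}(\Delta m_j+\Delta\alpha_j)$ (periodic extension), and for the toy model $\tilde y_i=\eta(\Delta m_i+\Delta\alpha_i)$. A jump at site $j$ means $m_j\to m_j+1$ (with periodic copies), which changes well coordinates as: full model, $\tilde y_j\to\tilde y_j-\frac{2\eta}{1+\eta}+\frac{1-\eta}{1+\eta}\frac{2\eta^L}{1-\eta^L}$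 and $\tilde y_i\to\tilde y_i+\frac{1-\eta}{1+\eta}\frac{\eta^{i-j}+\eta^{L-(i-j)}}{1-\eta^L}$ for $j<i<j+L$; toy model, $\tilde y_j\to\tilde y_j-2\eta$, $\tilde y_{j\pm1}\to\tilde y_{j\pm1}+\eta$. Zero-force avalanche (ZFA) applied to $\vec m$: (ZFA1) set $\vec m^*=\vec m$; (ZFA2) record $\tilde y_{\max}=\max_i\tilde y_i$; (ZFA3) let $j=\arg\max_i\tilde y^*_i$ and jump site $j$, updating $\vec m^*,\tilde y^*$; (ZFA4) if $\tilde y^*_i>\tilde y_{\max}$ for some $i$, go to (ZFA3); otherwise output $\vec m^*$. *)

(* Defs.v *)
From Stdlib Require Import Reals Lra Lia ZArith Arith.
Open Scope R_scope.

Definition eta (lam : R) : R := 2 / (2 + lam + sqrt (lam ^ 2 + 4 * lam)).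

Definition prv (L i : nat) : nat := ((i + (L - 1)) mod L)%nat.
Definition nxt (L i : nat) : nat := ((i + 1) mod L)%nat.

Definition lapR (L : nat) (x : nat -> R) (i : nat) : R :=
  x (prv L i) - 2 * x i + x (nxt L i).

Fixpoint sumL (f : nat -> R) (n : nat) : R :=
  match n with O => 0 | S k => sumL f k + f k end.

Fixpoint maxupto (f : nat -> R) (n : nat) : R :=
  match n with O => f O | S k => Rmax (maxupto f k) (f (S k)) end.
Definition maxL (f : nat -> R) (L : nat) : R := maxupto f (L - 1).

(** Configurations m in Z^L, represented as functions nat -> Z (only i < L matter). *)
Definition config := nat -> Z.

Definition cfg_le (L : nat) (m1 m2 : config) : Prop :=
  forall i, (i < L)%nat -> (m1 i <= m2 i)%Z.

Inductive model := FullModel | ToyModel.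

(** Periodization of the kernel: for 0 <= d < L,
    sum_{n in Z} eta^{|d + nL|} = (eta^d + eta^(L-d)) / (1 - eta^L). *)
Definition kern (e : R) (L d : nat) : R := (e ^ d + e ^ (L - d)) / (1 - e ^ L).

(** Well coordinates at F = 0.
    Full model: y_i = eta/(1-eta^2) sum_{j in Z} eta^{|i-j|} (Δm_j + Δα_j)
    (periodic extension), written via the periodized kernel. *)
Definition ytil (md : model) (L : nat) (lam : R) (alpha : nat -> R)
    (m : config) (i : nat) : R :=
  let e := eta lam in
  let s := fun k => lapR L (fun l => IZR (m l)) k + lapR L alpha k in
  match md with
  | FullModel => e / (1 - e ^ 2) * sumL (fun k => s k * kern e L ((i + L - k) mod L)) L
  | ToyModel => e * s i
  end.

Definition jump (m : config) (j : nat) : config :=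
  fun i => if Nat.eqb i j then (m i + 1)%Z else m i.

(** Steps ZFA3/ZFA4 of the zero-force avalanche, with the recorded value ymax
    (ZFA2).  [zfa_loop ... ymax m ms]: starting at the current state m (just after
    a jump), the algorithm outputs ms. *)
Inductive zfa_loop (md : model) (L : nat) (lam : R) (alpha : nat -> R) (ymax : R)
  : config -> config -> Prop :=
| zfa_stop : forall m,
    (forall i, (i < L)%nat -> ytil md L lam alpha m i <= ymax) ->
    zfa_loop md L lam alpha ymax m m
| zfa_step : forall m j ms,
    (exists i, (i < L)%nat /\ ytil md L lam alpha m i > ymax) ->
    (j < L)%nat ->
    ytil md L lam alpha m j = maxL (ytil md L lam alpha m) L ->
    zfa_loop md L lam alpha ymax (jump m j) ms ->
    zfa_loop md L lam alpha ymax m ms.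

(** ZFA applied to m outputs ms: (ZFA1) m* = m; (ZFA2) record ymax;
    (ZFA3) jump at the argmax; then loop (ZFA4). *)
Definition ZFA (md : model) (L : nat) (lam : R) (alpha : nat -> R)
    (m ms : config) : Prop :=
  exists j, (j < L)%nat /\
    ytil md L lam alpha m j = maxL (ytil md L lam alpha m) L /\
    zfa_loop md L lam alpha (maxL (ytil md L lam alpha m) L) (jump m j) ms.

(** Genericity of the environment (holds almost surely for i.i.d. uniform α):
    for every configuration the well coordinates at distinct sites differ, so
    the argmax used in the ZFA is unique. *)
Definition generic (md : model) (L : nat) (lam : R) (alpha : nat -> R) : Prop :=
  forall (m : config) i k, (i < L)%nat -> (k < L)%nat ->
    ytil md L lam alpha m i = ytil md L lam alpha m k -> i = k.

(* Main.v *)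
Require Import Defs.
From Stdlib Require Import Reals ZArith Arith Lra Lia.
Open Scope R_scope.

Lemma eta_bounds lam : 0 < lam -> 0 < eta lam < 1.
Proof.
  intros H. unfold eta. pose proof (sqrt_pos (lam ^ 2 + 4 * lam)).
  split.
  - apply Rdiv_lt_0_compat; lra.
  - apply (Rmult_lt_reg_r (2 + lam + sqrt (lam ^ 2 + 4 * lam))); [lra|].
    unfold Rdiv. rewrite Rmult_assoc, Rinv_l by lra. lra.
Qed.

Lemma sumL_ext f g n : (forall l, (l < n)%nat -> f l = g l) -> sumL f n = sumL g n.
Proof.
  induction n; intros H; simpl; auto.
  rewrite IHn by (intros; apply H; lia). rewrite H by lia. auto.
Qed.

Lemma sumL_add f g n : sumL (fun l => f l + g l) n = sumL f n + sumL g n.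
Proof. induction n; simpl; [lra|rewrite IHn; lra]. Qed.

Lemma sumL_scal c f n : sumL (fun l => c * f l) n = c * sumL f n.
Proof. induction n; simpl; [lra|rewrite IHn; lra]. Qed.

Lemma sumL_pt g a n :
  sumL (fun l => if Nat.eqb l a then g l else 0) n = if Nat.ltb a n then g a else 0.
Proof.
  induction n; simpl; [reflexivity|]. rewrite IHn.
  destruct (Nat.eqb_spec n a), (Nat.ltb_spec a n), (Nat.ltb_spec a (S n));
    subst; try lia; lra.
Qed.

Lemma nxt_spec L k : (k < L)%nat ->
  ((k + 1 < L)%nat /\ nxt L k = (k + 1)%nat) \/ ((k + 1)%nat = L /\ nxt L k = 0%nat).
Proof.
  intros H. unfold nxt. destruct (Nat.eq_dec (k+1) L) as [E|E].
  - right. split; auto. rewrite E. apply Nat.Div0.mod_same.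
  - left. split; [lia|]. apply Nat.mod_small. lia.
Qed.

Lemma prv_spec L k : (k < L)%nat ->
  (k = 0%nat /\ prv L k = (L - 1)%nat) \/ ((0 < k)%nat /\ prv L k = (k - 1)%nat).
Proof.
  intros H. unfold prv. destruct k as [|k].
  - left. split; auto. apply Nat.mod_small. lia.
  - right. split; [lia|].
    replace (S k + (L - 1))%nat with (k + 1 * L)%nat by lia.
    rewrite Nat.Div0.mod_add. rewrite Nat.mod_small by lia. lia.
Qed.

Lemma nxt_lt L k : (1 <= L)%nat -> (nxt L k < L)%nat.
Proof. intros. unfold nxt. apply Nat.mod_upper_bound. lia. Qed.
Lemma prv_lt L k : (1 <= L)%nat -> (prv L k < L)%nat.
Proof. intros. unfold prv. apply Nat.mod_upper_bound. lia. Qed.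

Lemma amod L i x : (i < L)%nat -> (x < L)%nat ->
  ((x <= i)%nat /\ ((i + L - x) mod L = i - x)%nat) \/
  ((i < x)%nat /\ ((i + L - x) mod L = i + L - x)%nat).
Proof.
  intros Hi Hx. destruct (Nat.le_gt_cases x i).
  - left. split; auto. replace (i + L - x)%nat with ((i - x) + 1 * L)%nat by lia.
    rewrite Nat.Div0.mod_add. apply Nat.mod_small. lia.
  - right. split; auto. apply Nat.mod_small. lia.
Qed.

Lemma prv_iff L l k : (l < L)%nat -> (k < L)%nat -> (prv L l = k <-> l = nxt L k).
Proof.
  intros Hl Hk. destruct (prv_spec L l Hl) as [[A B]|[A B]];
  destruct (nxt_spec L k Hk) as [[C D]|[C D]]; rewrite B, D; lia.
Qed.

Lemma nxt_iff L l k : (l < L)%nat -> (k < L)%nat -> (nxt L l = k <-> l = prv L k).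
Proof.
  intros Hl Hk. destruct (nxt_spec L l Hl) as [[A B]|[A B]];
  destruct (prv_spec L k Hk) as [[C D]|[C D]]; rewrite B, D; lia.
Qed.
Definition sv L (alpha : nat -> R) (m : config) k :=
  lapR L (fun l => IZR (m l)) k + lapR L alpha k.
Definition ind (b : bool) : R := if b then 1 else 0.
Definition Dj L k l := ind (Nat.eqb (prv L l) k) - 2 * ind (Nat.eqb l k) + ind (Nat.eqb (nxt L l) k).

Lemma ytil_full L lam alpha m i : ytil FullModel L lam alpha m i =
  eta lam / (1 - eta lam ^ 2) *
  sumL (fun k => sv L alpha m k * kern (eta lam) L ((i + L - k) mod L)) L.
Proof. reflexivity. Qed.

Lemma ytil_toy L lam alpha m i : ytil ToyModel L lam alpha m i = eta lam * sv L alpha m i.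
Proof. reflexivity. Qed.

Lemma sv_ext L alpha m m' l : (1 <= L)%nat -> (l < L)%nat ->
  (forall k, (k < L)%nat -> m k = m' k) -> sv L alpha m l = sv L alpha m' l.
Proof.
  intros HL Hl H. unfold sv, lapR.
  rewrite (H l), (H (prv L l)), (H (nxt L l)); auto using prv_lt, nxt_lt.
Qed.

Lemma ytil_ext md L lam alpha m m' i : (1 <= L)%nat -> (i < L)%nat ->
  (forall k, (k < L)%nat -> m k = m' k) ->
  ytil md L lam alpha m i = ytil md L lam alpha m' i.
Proof.
  intros HL Hi H. destruct md.
  - rewrite !ytil_full. f_equal. apply sumL_ext. intros l Hl.
    rewrite (sv_ext L alpha m m' l); auto.
  - rewrite !ytil_toy. rewrite (sv_ext L alpha m m' i); auto.
Qed.

Lemma sv_jump L alpha m k l : sv L alpha (jump m k) l = sv L alpha m l + Dj L k l.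
Proof.
  unfold sv, lapR, jump, Dj, ind.
  destruct (Nat.eqb (prv L l) k), (Nat.eqb l k), (Nat.eqb (nxt L l) k);
    rewrite ?plus_IZR; lra.
Qed.

Lemma kern_conv e t u : 0 < e < 1 ->
  0 <= kern e (t + u + 2) t - 2 * kern e (t + u + 2) (t + 1) + kern e (t + u + 2) (t + 2).
Proof.
  intros [H0 H1]. unfold kern.
  replace (t + u + 2 - t)%nat with (u + 2)%nat by lia.
  replace (t + u + 2 - (t + 1))%nat with (u + 1)%nat by lia.
  replace (t + u + 2 - (t + 2))%nat with u by lia.
  rewrite !pow_add.
  assert (HG : 0 <= e ^ t * e ^ u * e ^ 2 < 1).
  { rewrite <- !pow_add. apply pow_lt_1_compat; lia || lra. }
  pose proof (pow_lt e t H0). pose proof (pow_lt e u H0).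
  set (E := e ^ t) in *. set (F := e ^ u) in *.
  replace ((E + F * e ^ 2) / (1 - E * F * e ^ 2) -
   2 * ((E * e ^ 1 + F * e ^ 1) / (1 - E * F * e ^ 2)) +
   (E * e ^ 2 + F) / (1 - E * F * e ^ 2))
   with ((E + F) * ((1 - e) * (1 - e)) / (1 - E * F * e ^ 2)) by (field; lra).
  apply Rmult_le_pos.
  - apply Rmult_le_pos; [lra|]. apply Rmult_le_pos; lra.
  - left. apply Rinv_0_lt_compat. lra.
Qed.

Lemma kern_0L e L : kern e L 0 = kern e L L.
Proof. unfold kern. rewrite Nat.sub_diag, Nat.sub_0_r. simpl. lra. Qed.
Lemma idx_lemma L i k : (i < L)%nat -> (k < L)%nat -> i <> k ->
  exists t u, L = (t + u + 2)%nat /\ ((i + L - nxt L k) mod L = t)%nat /\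
    ((i + L - k) mod L = t + 1)%nat /\
    (((i + L - prv L k) mod L = t + 2)%nat \/ ((i + L - prv L k) mod L = 0 /\ u = 0)%nat).
Proof.
  intros Hi Hk Hik.
  assert (HL : (1 <= L)%nat) by lia.
  pose proof (amod L i k Hi Hk) as A1.
  pose proof (amod L i (nxt L k) Hi (nxt_lt L k HL)) as A2.
  pose proof (amod L i (prv L k) Hi (prv_lt L k HL)) as A3.
  pose proof (nxt_spec L k Hk) as N. pose proof (prv_spec L k Hk) as P.
  revert A1 A2 A3 N P.
  generalize ((i + L - k) mod L)%nat ((i + L - nxt L k) mod L)%nat
     ((i + L - prv L k) mod L)%nat (nxt L k) (prv L k).
  intros a b c n p A1 A2 A3 N P.
  exists (a - 1)%nat, (L - a - 1)%nat.
  destruct N as [[N1 N2]|[N1 N2]]; destruct P as [[P1 P2]|[P1 P2]]; subst n p;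
  destruct A1 as [[X1 Y1]|[X1 Y1]]; destruct A2 as [[X2 Y2]|[X2 Y2]];
  destruct A3 as [[X3 Y3]|[X3 Y3]]; lia.
Qed.

Lemma Dj_sum L k (K : nat -> R) : (1 <= L)%nat -> (k < L)%nat ->
  sumL (fun l => Dj L k l * K l) L = K (nxt L k) - 2 * K k + K (prv L k).
Proof.
  intros HL Hk.
  rewrite (sumL_ext _ (fun l => (1 * (if Nat.eqb l (nxt L k) then K l else 0) +
      (-2) * (if Nat.eqb l k then K l else 0)) +
      1 * (if Nat.eqb l (prv L k) then K l else 0))).
  2:{ intros l Hl. pose proof (prv_iff L l k Hl Hk). pose proof (nxt_iff L l k Hl Hk).
      unfold Dj, ind.
      destruct (Nat.eqb_spec (prv L l) k), (Nat.eqb_spec l (nxt L k)),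
        (Nat.eqb_spec l k), (Nat.eqb_spec (nxt L l) k), (Nat.eqb_spec l (prv L k));
      try (exfalso; tauto); cbv beta iota; lra. }
  rewrite !sumL_add, !sumL_scal, !sumL_pt.
  destruct (Nat.ltb_spec (nxt L k) L); [|pose proof (nxt_lt L k HL); lia].
  destruct (Nat.ltb_spec (prv L k) L); [|pose proof (prv_lt L k HL); lia].
  destruct (Nat.ltb_spec k L); [|lia]. lra.
Qed.

Lemma jump_mono md L lam alpha m k i : (1 <= L)%nat -> 0 < lam ->
  (k < L)%nat -> (i < L)%nat -> i <> k ->
  ytil md L lam alpha m i <= ytil md L lam alpha (jump m k) i.
Proof.
  intros HL Hlam Hk Hi Hik. pose proof (eta_bounds lam Hlam) as He.
  set (e := eta lam) in *.
  destruct md.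
  - rewrite !ytil_full. fold e.
    rewrite (sumL_ext (fun k0 => sv L alpha (jump m k) k0 * kern e L ((i + L - k0) mod L))
      (fun l => sv L alpha m l * kern e L ((i + L - l) mod L) +
                Dj L k l * kern e L ((i + L - l) mod L))).
    2:{ intros l _. rewrite sv_jump. ring. }
    rewrite sumL_add, (Dj_sum L k (fun l => kern e L ((i + L - l) mod L))) by auto.
    assert (0 <= kern e L ((i + L - nxt L k) mod L) - 2 * kern e L ((i + L - k) mod L) +
       kern e L ((i + L - prv L k) mod L)).
    { destruct (idx_lemma L i k Hi Hk Hik) as (t & u & EL & E1 & E2 & [E3|[E3 Eu]]).
      - rewrite E1, E2, E3, EL. apply kern_conv; auto.
      - rewrite E1, E2, E3, kern_0L. subst u. rewrite EL at 4.
        rewrite Nat.add_0_r. rewrite EL. rewrite Nat.add_0_r.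
        pose proof (kern_conv e t 0 He). rewrite Nat.add_0_r in H. exact H. }
    assert (0 < e / (1 - e ^ 2)).
    { apply Rdiv_lt_0_compat; [lra|]. simpl. nra. }
    nra.
  - rewrite !ytil_toy. fold e. rewrite sv_jump. unfold Dj, ind.
    destruct (Nat.eqb_spec i k); [lia|].
    destruct (Nat.eqb (prv L i) k), (Nat.eqb (nxt L i) k); nra.
Qed.
Definition addk (m : config) k (n : nat) : config :=
  fun l => if Nat.eqb l k then (m l + Z.of_nat n)%Z else m l.

Lemma jumps_mono md L lam alpha k i : (1 <= L)%nat -> 0 < lam ->
  (k < L)%nat -> (i < L)%nat -> i <> k -> forall n m,
  ytil md L lam alpha m i <= ytil md L lam alpha (addk m k n) i.
Proof.
  intros HL Hlam Hk Hi Hik n. induction n; intros m.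
  - right. apply ytil_ext; auto. intros l _. unfold addk.
    destruct (Nat.eqb l k); lia.
  - apply Rle_trans with (ytil md L lam alpha (jump (addk m k n) k) i).
    + eapply Rle_trans; [apply (IHn m)|]. apply jump_mono; auto.
    + right. apply ytil_ext; auto. intros l _. unfold addk, jump.
      destruct (Nat.eqb l k); lia.
Qed.

Lemma mono md L lam alpha m1 m2 i : (1 <= L)%nat -> 0 < lam ->
  cfg_le L m1 m2 -> (i < L)%nat -> m1 i = m2 i ->
  ytil md L lam alpha m1 i <= ytil md L lam alpha m2 i.
Proof.
  intros HL Hlam Hle Hi Heq.
  set (mp := fun p : nat => (fun l : nat => if Nat.ltb l p then m2 l else m1 l) : config).
  assert (forall p, ytil md L lam alpha m1 i <= ytil md L lam alpha (mp p) i).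
  { induction p.
    - right. apply ytil_ext; auto.
    - destruct (Nat.le_gt_cases L p) as [Hp|Hp].
      + eapply Rle_trans; [apply IHp|]. right. apply ytil_ext; auto.
        intros l Hl. unfold mp. destruct (Nat.ltb_spec l p), (Nat.ltb_spec l (S p)); lia.
      + destruct (Nat.eq_dec p i) as [Epi|Epi].
        * eapply Rle_trans; [apply IHp|]. right. apply ytil_ext; auto.
          intros l Hl. unfold mp. destruct (Nat.ltb_spec l p), (Nat.ltb_spec l (S p)); try lia.
          assert (l = i) by lia. subst l. auto.
        * eapply Rle_trans; [apply IHp|].
          eapply Rle_trans; [apply (jumps_mono md L lam alpha p i HL Hlam Hp Hi (not_eq_sym Epi)
                               (Z.to_nat (m2 p - m1 p)) (mp p))|].
          right. apply ytil_ext; auto. intros l Hl. unfold addk, mp.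
          pose proof (Hle p Hp).
          destruct (Nat.eqb_spec l p), (Nat.ltb_spec l p), (Nat.ltb_spec l (S p)); try lia.
          all: subst; lia. }
  eapply Rle_trans; [apply (H L)|]. right. apply ytil_ext; auto.
  intros l Hl. unfold mp. destruct (Nat.ltb_spec l L); lia.
Qed.

Lemma maxupto_ge f n i : (i <= n)%nat -> f i <= maxupto f n.
Proof.
  induction n; intros H; simpl.
  - assert (i = 0%nat) by lia. subst; lra.
  - destruct (Nat.eq_dec i (S n)). subst. apply Rmax_r.
    eapply Rle_trans; [apply IHn; lia|apply Rmax_l].
Qed.

Lemma maxL_ge f L i : (i < L)%nat -> f i <= maxL f L.
Proof. intros. unfold maxL. apply maxupto_ge. lia. Qed.

Lemma jump_ge L m j : cfg_le L m (jump m j).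
Proof. intros i _. unfold jump. destruct (Nat.eqb i j); lia. Qed.

Lemma cfg_trans L a b c : cfg_le L a b -> cfg_le L b c -> cfg_le L a c.
Proof. intros H1 H2 i Hi. specialize (H1 i Hi). specialize (H2 i Hi). lia. Qed.

Lemma loop_ge md L lam alpha ymax m ms :
  zfa_loop md L lam alpha ymax m ms -> cfg_le L m ms.
Proof.
  induction 1. intros i _; lia.
  eapply cfg_trans; [apply jump_ge|eauto].
Qed.

Lemma loop_stop md L lam alpha ymax m ms :
  zfa_loop md L lam alpha ymax m ms -> forall i, (i < L)%nat -> ytil md L lam alpha ms i <= ymax.
Proof. induction 1; auto. Qed.

Lemma jump_lt_le L m M j : (j < L)%nat -> cfg_le L m M -> (m j < M j)%Z ->
  cfg_le L (jump m j) M.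
Proof.
  intros Hj H Hlt i Hi. unfold jump. destruct (Nat.eqb_spec i j); subst; auto.
  lia.
Qed.

Lemma loop_le md L lam alpha ymax m ms M : (1 <= L)%nat -> 0 < lam ->
  zfa_loop md L lam alpha ymax m ms -> cfg_le L m M ->
  (forall i, (i < L)%nat -> ytil md L lam alpha M i <= ymax) -> cfg_le L ms M.
Proof.
  intros HL Hlam. induction 1; intros Hle HM; auto.
  apply IHzfa_loop; auto. apply jump_lt_le; auto.
  destruct H as (i & Hi & Hy).
  pose proof (maxL_ge (ytil md L lam alpha m) L i Hi).
  destruct (Z.lt_ge_cases (m j) (M j)) as [C|C]; auto.
  assert (m j = M j) by (specialize (Hle j H0); lia).
  pose proof (mono md L lam alpha m M j HL Hlam Hle H0 H3).
  pose proof (HM j H0). exfalso. lra.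
Qed.

Theorem lemma1 (md : model) (L : nat) (lam : R) (alpha : nat -> R)
    (m1 m2 m1s : config) :
  (1 <= L)%nat -> 0 < lam ->
  (forall i, (i < L)%nat -> -1/2 < alpha i < 1/2) ->
  generic md L lam alpha ->
  cfg_le L m1 m2 ->
  ZFA md L lam alpha m1 m1s ->
  (* (i) *)
  (maxL (ytil md L lam alpha m1) L > maxL (ytil md L lam alpha m2) L ->
     cfg_le L m1s m2) /\
  (* (ii) *)
  (forall j, (j < L)%nat ->
     maxL (ytil md L lam alpha m1) L = maxL (ytil md L lam alpha m2) L ->
     ytil md L lam alpha m1 j = maxL (ytil md L lam alpha m1) L ->
     (m1 j < m2 j)%Z ->
     cfg_le L m1s m2) /\
  (* (iii) *)
  (forall m2s : config, ZFA md L lam alpha m2 m2s ->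
     maxL (ytil md L lam alpha m1) L >= maxL (ytil md L lam alpha m2) L ->
     cfg_le L m1s m2s).
Proof.
  intros HL Hlam _ Hgen Hle (j0 & Hj0 & Hy0 & Hloop).
  split; [|split].
  - intros Hgt. eapply loop_le; eauto.
    + apply jump_lt_le; auto.
      destruct (Z.lt_ge_cases (m1 j0) (m2 j0)) as [C|C]; auto.
      assert (m1 j0 = m2 j0) by (specialize (Hle j0 Hj0); lia).
      pose proof (mono md L lam alpha m1 m2 j0 HL Hlam Hle Hj0 H).
      pose proof (maxL_ge (ytil md L lam alpha m2) L j0 Hj0). exfalso. lra.
    + intros i Hi. pose proof (maxL_ge (ytil md L lam alpha m2) L i Hi). lra.
  - intros j Hj Heq Hyj Hlt. eapply loop_le; eauto.
    + apply jump_lt_le; auto.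
      assert (j0 = j) by (apply (Hgen m1); auto; lra). subst; auto.
    + intros i Hi. pose proof (maxL_ge (ytil md L lam alpha m2) L i Hi). lra.
  - intros m2s (j2 & Hj2 & Hy2 & Hloop2) Hge.
    pose proof (loop_ge _ _ _ _ _ _ _ Hloop2) as G2.
    pose proof (loop_stop _ _ _ _ _ _ _ Hloop2) as S2.
    eapply loop_le; eauto.
    + apply jump_lt_le; auto.
      * eapply cfg_trans; [exact Hle|]. eapply cfg_trans; [apply jump_ge|exact G2].
      * destruct (Z.lt_ge_cases (m1 j0) (m2 j0)) as [C|C].
        -- pose proof (jump_ge L m2 j2 j0 Hj0). pose proof (G2 j0 Hj0). lia.
        -- assert (m1 j0 = m2 j0) by (specialize (Hle j0 Hj0); lia).
           pose proof (mono md L lam alpha m1 m2 j0 HL Hlam Hle Hj0 H).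
           pose proof (maxL_ge (ytil md L lam alpha m2) L j0 Hj0).
           assert (j0 = j2) by (apply (Hgen m2); auto; lra). subst j2.
           pose proof (G2 j0 Hj0). unfold jump in H2.
           rewrite Nat.eqb_refl in H2. lia.
    + intros i Hi. pose proof (S2 i Hi). lra.
Qed.
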